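(* The class of split graphs is degree sandwich monotone; that is, for every split graph $G$ and every set $F\subseteq E(G)$ such that $G-F$ is a split graph, every degree-minimal edge $e$ in $F$ satisfies that $G-e$ is a split graph.
   Context: A split graph is a graph whose vertex set can be partitioned into a clique and an independent set. Given a graph $G$ and $F\subseteq E(G)$, an edge $e\in F$ is degree-minimal in $F$ if its endpoints can be named $u,v$ so that (i) $u$ has the smallest degree in $G$ among all vertices incident to an edge of $F$, and (ii) $v$ has the smallest degree in $G$ among all vertices $w$ with $uw\in F$. *)

(* Defs.v *)
From mathcomp Require Import all_boot.
Set Implicit Arguments. Unset Strict Implicit. Unset Printing Implicit Defensive.

(* A set of edges F ⊆ E(G) is represented by a symmetric relation
   F : rel T with F x y -> g x y. *)

Definition simple_graph (T : finType) (g : rel T) : Prop :=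
  symmetric g /\ irreflexive g.

Definition deg (T : finType) (g : rel T) (x : T) : nat := #|[set y | g x y]|.

Definition is_split (T : finType) (g : rel T) : Prop :=
  exists K : {set T},
    (forall x y, x \in K -> y \in K -> x != y -> g x y) /\
    (forall x y, x \notin K -> y \notin K -> ~~ g x y).

Definition remove_edges (T : finType) (g F : rel T) : rel T :=
  fun x y => g x y && ~~ F x y.

Definition remove_edge (T : finType) (g : rel T) (u v : T) : rel T :=
  fun x y => g x y && ~~ (((x == u) && (y == v)) || ((x == v) && (y == u))).

Definition degree_minimal (T : finType) (g F : rel T) (u v : T) : Prop :=
  [/\ F u v,
      (forall w z, F w z -> deg g u <= deg g w) &
      (forall w, F u w -> deg g v <= deg g w)].

(* Main.v *)
Require Import Defs.
From mathcomp Require Import all_boot.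
Set Implicit Arguments. Unset Strict Implicit. Unset Printing Implicit Defensive.

Definition splitb (T : finType) (g : rel T) (K : {set T}) : bool :=
  [forall x, forall y, ((x \in K) && (y \in K) && (x != y)) ==> g x y] &&
  [forall x, forall y, ((x \notin K) && (y \notin K)) ==> ~~ g x y].

Lemma splitbP (T : finType) (g : rel T) (K : {set T}) :
  splitb g K <->
  ((forall x y, x \in K -> y \in K -> x != y -> g x y) /\
   (forall x y, x \notin K -> y \notin K -> ~~ g x y)).
Proof.
split.
  case/andP => /forallP H1 /forallP H2; split.
    move=> x y xK yK xy; move/forallP: (H1 x) => /(_ y) /implyP; apply.
    by rewrite xK yK xy.
  move=> x y xK yK; move/forallP: (H2 x) => /(_ y) /implyP; apply.
  by rewrite xK yK.
case=> H1 H2; apply/andP; split; apply/forallP => x; apply/forallP => y;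
  apply/implyP.
  by case/andP => /andP [xK yK] xy; apply: H1.
by case/andP => xK yK; apply: H2.
Qed.

Theorem theorem4p1 (T : finType) (g : rel T) (F : rel T) :
  simple_graph g -> is_split g ->
  symmetric F -> (forall x y, F x y -> g x y) ->
  is_split (remove_edges g F) ->
  forall u v : T, degree_minimal g F u v ->
  is_split (remove_edge g u v).
Proof.
move=> [gsym girr] [K0 HK0] Fsym Fg [K' [K'c K'i]] u v [Fuv Fmin _].
have [K [HK Kmax]] : exists K : {set T}, splitb g K /\
    forall K2, splitb g K2 -> #|K2| <= #|K|.
  have H0 : splitb g K0 by apply/splitbP.
  case: (@arg_maxnP _ K0 (splitb g) (fun K : {set T} => #|K|) H0) => K HK Kmax.
  by exists K.
move/splitbP: (HK) => [Kc Ki].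
have nonnb : forall c, c \notin K -> exists2 w, w \in K & ~~ g c w.
  move=> c cK.
  case: (boolP [forall w, (w \in K) ==> g c w]) => [/forallP Hall|].
    have : splitb g (c |: K).
      apply/splitbP; split.
        move=> x y; rewrite !in_setU1.
        case/predU1P => [->|xK]; case/predU1P => [->|yK] //.
        - by rewrite eqxx.
        - by move=> _; move/implyP: (Hall y); apply.
        - by move=> _; rewrite gsym; move/implyP: (Hall x); apply.
        - by apply: Kc.
      move=> x y; rewrite !in_setU1 !negb_or => /andP [_ xK] /andP [_ yK].
      by apply: Ki.
    move/Kmax; rewrite cardsU1 cK add1n ltnn //.
  rewrite negb_forall => /existsP [w]; rewrite negb_imply => /andP [wK gcw].
  by exists w.
have degK : forall y, y \notin K -> deg g y < #|K|.
  move=> y yK; case: (nonnb y yK) => w wK ngw.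
  rewrite /deg (cardsD1 w K) wK add1n ltnS; apply: subset_leq_card.
  apply/subsetP => z; rewrite inE => gyz; rewrite !inE.
  apply/andP; split.
    by apply/eqP => zw; rewrite -zw gyz in ngw.
  apply/negPn/negP => zK; move: (Ki y z yK zK); by rewrite gyz.
have degIn : forall y a, y \in K -> a \notin K -> g y a -> #|K| <= deg g y.
  move=> y a yK aK gya.
  rewrite /deg (cardsD1 y K) yK add1n.
  have -> : (#|K :\ y|).+1 = #|a |: (K :\ y)|.
    by rewrite cardsU1 !inE (negbTE aK) andbF.
  apply: subset_leq_card; apply/subsetP => z; rewrite !inE.
  case/predU1P => [->//|/andP [zy zK]].
  by apply: Kc => //; rewrite eq_sym.
have uvne : u != v.
  by apply/eqP => e; move: (girr u); rewrite {2}e (Fg _ _ Fuv).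
case: (boolP ((u \in K) && (v \in K))) => [/andP [uK vK]|nuv].
2:{ exists K; split.
    - move=> x y xK yK xy; rewrite /remove_edge Kc //=.
      apply/negP => /orP [] /andP [/eqP ex /eqP ey]; subst x y;
        by move: nuv; rewrite ?xK ?yK.
    - by move=> x y xK yK; rewrite /remove_edge negb_and Ki. }
case: (boolP [forall a, (a \notin K) ==> ~~ g u a]) => [/forallP Hu|].
  exists (K :\ u); split.
    move=> x y; rewrite !inE => /andP [xu xK] /andP [yu yK] xy.
    by rewrite /remove_edge Kc //= (negbTE xu) (negbTE yu) andbF.
  move=> x y; rewrite !inE !negb_and !negbK => xn yn.
  rewrite /remove_edge /=; apply/orP; left.
  case/orP: xn => [/eqP ->|xK]; case/orP: yn => [/eqP ->|yK].
  - by rewrite girr.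
  - by move/implyP: (Hu y); apply.
  - by rewrite gsym; move/implyP: (Hu x); apply.
  - by apply: Ki.
rewrite negb_forall => /existsP [a]; rewrite negb_imply negbK => /andP [aK gua].
case: (boolP [forall b, (b \notin K) ==> ~~ g v b]) => [/forallP Hv|].
  exists (K :\ v); split.
    move=> x y; rewrite !inE => /andP [xv xK] /andP [yv yK] xy.
    by rewrite /remove_edge Kc //= (negbTE xv) (negbTE yv) !andbF.
  move=> x y; rewrite !inE !negb_and !negbK => xn yn.
  rewrite /remove_edge /=; apply/orP; left.
  case/orP: xn => [/eqP ->|xK]; case/orP: yn => [/eqP ->|yK].
  - by rewrite girr.
  - by move/implyP: (Hv y); apply.
  - by rewrite gsym; move/implyP: (Hv x); apply.
  - by apply: Ki.
rewrite negb_forall => /existsP [b]; rewrite negb_imply negbK => /andP [bK gvb].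
exfalso.
have degu : #|K| <= deg g u := degIn u a uK aK gua.
have FK : forall y z, F y z -> y \in K.
  move=> y z Fyz; apply/negPn/negP => yK.
  by move: (leq_ltn_trans (Fmin _ _ Fyz) (degK y yK)); rewrite ltnNge degu.
have main : forall x c, x \in K -> x \notin K' -> c \notin K -> g x c -> False.
  move=> x c xK xK' cK gxc.
  have ncx : ~~ F x c by apply/negP; rewrite Fsym => /FK; rewrite (negbTE cK).
  have cK' : c \in K'.
    apply/negPn/negP => cK'; move: (K'i x c xK' cK').
    by rewrite /remove_edges gxc ncx.
  case: (nonnb c cK) => w wK ngw.
  have wc : w != c by apply/eqP => e; rewrite e in wK; rewrite wK in cK.
  have wK' : w \notin K'.
    apply/negP => wK'; move: (K'c c w cK' wK'); rewrite eq_sym wc.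
    by move=> /(_ isT) /andP [gcw _]; rewrite gcw in ngw.
  have wx : w != x.
    by apply/eqP => e; rewrite e gsym gxc in ngw.
  have Fwx : F w x.
    move: (K'i w x wK' xK'); rewrite /remove_edges Kc // negb_and negbK.
    by [].
  have degw : deg g w < #|K|.
    rewrite /deg (cardsD1 w K) wK add1n ltnS; apply: subset_leq_card.
    apply/subsetP => d; rewrite inE => gwd; rewrite !inE.
    apply/andP; split.
      by apply/eqP => e; move: gwd; rewrite e girr.
    apply/negPn/negP => dK.
    have dc : d != c by apply/eqP => e; move: ngw; rewrite -e gsym gwd.
    have dK' : d \notin K'.
      apply/negP => dK'; move: (K'c c d cK' dK'); rewrite eq_sym dc.
      move=> /(_ isT) /andP [gcd _]; by move: (Ki c d cK dK); rewrite gcd.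
    move: (K'i w d wK' dK'); rewrite /remove_edges gwd /= negbK.
    by rewrite Fsym => /FK; rewrite (negbTE dK).
  by move: (leq_ltn_trans (Fmin _ _ Fwx) degw); rewrite ltnNge degu.
case: (boolP (u \in K')) => uK'.
  case: (boolP (v \in K')) => vK'.
    by move: (K'c u v uK' vK' uvne); rewrite /remove_edges Fuv andbF.
  exact: (main v b vK vK' bK gvb).
exact: (main u a uK uK' aK gua).
Qed.
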